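(* Let $x\in\beta\mathbb{N}$ and $n\in\mathbb{N}$. Then there exists $\alpha\in\mathcal{A}$ with $\sigma(\alpha)=n$ and $F_\alpha\subseteq x$ if and only if $x\in\overline{L_n}$.
   Context: $\mathbb{N}=\{1,2,3,\dots\}$; $\beta\mathbb{N}$ is the Stone–Čech compactification of discrete $\mathbb{N}$, identified with the set of ultrafilters on $\mathbb{N}$ (natural numbers identified with principal ultrafilters). For $A\subseteq\mathbb{N}$, $\overline{A}=\{x\in\beta\mathbb{N}: A\in x\}$. $P$ is the set of prime numbers, $L_0=\{1\}$ and for $n\ge1$, $L_n=\{a_1a_2\cdots a_n: a_1,\dots,a_n\in P\}$ (products of exactly $n$ primes, counted with multiplicity). For $p\in\overline{P}$ and $k\in\mathbb{N}$, $p^k$ denotes the ultrafilter generated by the sets $A^k=\{a^k:a\in A\}$, $A\in p$; such ultrafilters are called basic, and $\mathcal{B}$ is the set of basic ultrafilters. $\mathcal{A}$ is the set of functions $\alpha:\mathcal{B}\to\mathbb{N}\cup\{0\}$ with finite support, written $\alpha=\{(p_1^{k_1},n_1),\dots,(p_m^{k_m},n_m)\}$ with $p_i\in\overline{P}$, the $p_i^{k_i}$ distinct and $n_i\ge1$ (and $\alpha(b)=0$ elsewhere). For such $\alpha$, $\sigma(\alpha)=\sum_{i=1}^m k_in_i$, and $F_\alpha$ is the family of all sets $(A_1^{k_1})^{(n_1)}(A_2^{k_2})^{(n_2)}\cdots(A_m^{k_m})^{(n_m)}=\{\prod_{i=1}^m\prod_{j=1}^{n_i}a_{i,j}^{k_i}: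 a_{i,j}\in A_i \text{ for all } i,j,\ \text{the } a_{i,j} \text{ pairwise distinct}\}$, where $A_i\in p_i$, $A_i\subseteq P$, $A_i=A_j$ if $p_i=p_j$, and $A_i\cap A_j=\emptyset$ otherwise. *)

(* Defs.v *)
From mathcomp Require Import all_boot.
Set Implicit Arguments. Unset Strict Implicit. Unset Printing Implicit Defensive.

Definition nset := nat -> Prop.

Definition Npos : nset := fun n => 0 < n.

(* Points of beta N: ultrafilters on N = {1,2,...}, presented as families
   of subsets of nat containing Npos (so every member meets N; a set A
   belongs to x iff A ∩ N does). *)
Definition is_ultrafilter (x : nset -> Prop) : Prop :=
  [/\ x Npos,
      ~ x (fun _ => False),
      (forall A B : nset, x A -> (forall t, A t -> B t) -> x B),
      (forall A B : nset, x A -> x B -> x (fun t => A t /\ B t)) &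
      (forall A : nset, x A \/ x (fun t => ~ A t))].

Definition Primes : nset := fun a => prime a.

(* \overline{A} ∋ x  iff  A ∈ x. *)
Definition in_closure (A : nset) (x : nset -> Prop) : Prop := x A.

Definition L (n : nat) : nset :=
  fun y => exists s : seq nat, [/\ size s = n, all prime s & y = \prod_(q <- s) q].

Definition upow (p : nset -> Prop) (k : nat) : nset -> Prop :=
  fun B => exists A : nset, p A /\ (forall a, A a -> B (a ^ k)).

Definition fam_eq (x y : nset -> Prop) : Prop := forall B, x B <-> y B.

(* An element alpha of \mathcal{A}: alpha = {(p_i^{k_i}, n_i) : i < m},
   given by m and the data p_i, k_i, n_i (indices i < m), with
   p_i in \overline{P}, k_i >= 1, n_i >= 1, and the p_i^{k_i} pairwise
   distinct. *)
Definition is_alpha (m : nat) (p : nat -> nset -> Prop) (k nn : nat -> nat) : Prop :=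
  [/\ (forall i, i < m -> is_ultrafilter (p i) /\ in_closure Primes (p i)),
      (forall i, i < m -> 0 < k i),
      (forall i, i < m -> 0 < nn i) &
      (forall i j, i < m -> j < m -> i <> j -> ~ fam_eq (upow (p i) (k i)) (upow (p j) (k j)))].

Definition sigma (m : nat) (k nn : nat -> nat) : nat := \sum_(i < m) k i * nn i.

Definition admissible (m : nat) (p : nat -> nset -> Prop) (A : nat -> nset) : Prop :=
  [/\ (forall i, i < m -> p i (A i)),
      (forall i, i < m -> forall t, A i t -> Primes t),
      (forall i j, i < m -> j < m -> fam_eq (p i) (p j) -> forall t, A i t <-> A j t) &
      (forall i j, i < m -> j < m -> ~ fam_eq (p i) (p j) -> forall t, ~ (A i t /\ A j t))].

(* The set (A_1^{k_1})^{(n_1)} ... (A_m^{k_m})^{(n_m)}: all products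
   prod_i prod_{j < n_i} a_{i,j}^{k_i} with a_{i,j} in A_i, pairwise distinct. *)
Definition Fset (m : nat) (k nn : nat -> nat) (A : nat -> nset) : nset :=
  fun y => exists a : nat -> nat -> nat,
    [/\ (forall i j, i < m -> j < nn i -> A i (a i j)),
        (forall i j i' j', i < m -> j < nn i -> i' < m -> j' < nn i' ->
           (i, j) <> (i', j') -> a i j <> a i' j') &
        y = \prod_(i < m) \prod_(j < nn i) (a i j) ^ (k i)].

Definition F_sub (m : nat) (p : nat -> nset -> Prop) (k nn : nat -> nat)
  (x : nset -> Prop) : Prop :=
  forall A : nat -> nset, admissible m p A -> x (Fset m k nn A).

(* Main.v *)
Require Import Defs.
From mathcomp Require Import all_boot.
From Stdlib Require Import Classical ClassicalEpsilon FunctionalExtensionality PropExtensionality.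
Set Implicit Arguments. Unset Strict Implicit. Unset Printing Implicit Defensive.

Section UF.
Variable x : nset -> Prop.
Hypothesis hx : is_ultrafilter x.

Lemma uf_up (A B : nset) : x A -> (forall t, A t -> B t) -> x B.
Proof. by case: hx => _ _ H _ _; apply: H. Qed.

Lemma uf_and (A B : nset) : x A -> x B -> x (fun t => A t /\ B t).
Proof. by case: hx => _ _ _ H _; apply: H. Qed.

Lemma uf_T : x (fun _ => True).
Proof. case: hx => H _ _ _ _; exact: uf_up H _. Qed.

Lemma uf_ne (A : nset) : x A -> exists t, A t.
Proof.
move=> HA; apply: NNPP => Hn; case: hx => _ H0 _ _ _; apply: H0.
apply: uf_up HA _ => t At; apply: Hn; by exists t.
Qed.

Lemma uf_compl (A : nset) : ~ x A -> x (fun t => ~ A t).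
Proof. by case: hx => _ _ _ _ H; case: (H A). Qed.

Lemma uf_fin m (B : nat -> nset) : (forall l, l < m -> x (B l)) ->
  x (fun t => forall l, l < m -> B l t).
Proof.
elim: m => [|m IH] H.
  by apply: uf_up uf_T _.
have H1 := IH (fun l hl => H l (ltnW hl)).
have H2 := H m (ltnSn m).
apply: uf_up (uf_and H1 H2) _ => t [h1 h2] l; rewrite ltnS leq_eqVlt.
by case/orP => [/eqP -> | /h1].
Qed.

Lemma uf_pick (B : nset) (f : nat -> nat) N : x B -> (forall y, B y -> f y < N) ->
  exists2 v, v < N & x (fun y => B y /\ f y = v).
Proof.
elim: N B => [|N IH] B HB Hf.
  by case: (uf_ne HB) => t /Hf.
case: (classic (x (fun y => B y /\ f y = N))) => H.
  by exists N.
have H' := uf_and HB (uf_compl H).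
case: (IH _ H') => [y [By Hy]|v vN Hv].
  by have := Hf y By; rewrite ltnS leq_eqVlt => /orP [/eqP E|//]; case: Hy.
exists v; first exact: ltnW.
by apply: uf_up Hv _ => t [[? _] ?].
Qed.

End UF.

Lemma fam_eq_eq (u v : nset -> Prop) : fam_eq u v -> u = v.
Proof.
move=> H; apply: functional_extensionality => B; apply: propositional_extensionality; exact: H.
Qed.

Lemma fam_eq_sym u v : fam_eq u v -> fam_eq v u.
Proof. by move=> H B; split => /H. Qed.

Lemma L0 : L 0 1.
Proof. by exists [::]; rewrite big_nil. Qed.

Lemma L_mul a b y z : L a y -> L b z -> L (a + b) (y * z).
Proof.
move=> [s1 [h1 h2 ->]] [s2 [h3 h4 ->]]; exists (s1 ++ s2).
by rewrite size_cat all_cat h1 h3 h2 h4 big_cat.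
Qed.

Lemma L_pow q k : prime q -> L k (q ^ k).
Proof.
move=> pq; elim: k => [|k IH]; first exact: L0.
rewrite expnS -add1n; apply: L_mul IH.
by exists [:: q]; rewrite big_cons big_nil muln1 /= pq.
Qed.

Lemma prod_primes_gt0 (s : seq nat) : all prime s -> 0 < \prod_(q <- s) q.
Proof.
elim: s => [|q s IH] /=; first by rewrite big_nil.
by case/andP => pq /IH H; rewrite big_cons muln_gt0 prime_gt0.
Qed.

Lemma prime_dvd_prod p (s : seq nat) : prime p -> all prime s ->
  p %| \prod_(q <- s) q -> p \in s.
Proof.
move=> pp; elim: s => [|q s IH] /=.
  by rewrite big_nil dvdn1 => _ /eqP E; rewrite E in pp.
case/andP => pq hs; rewrite big_cons Euclid_dvdM // dvdn_prime2 // in_cons.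
by case/orP => [->//|/(IH hs) ->]; rewrite orbT.
Qed.

Lemma prod_split p (s : seq nat) :
  \prod_(q <- s) q = p ^ count (pred1 p) s * \prod_(q <- [seq t <- s | t != p]) q.
Proof.
elim: s => [|q s IH] /=; first by rewrite !big_nil.
rewrite big_cons IH; case: eqP => [->|_] /=.
  by rewrite add1n expnS mulnA.
by rewrite big_cons add0n mulnCA.
Qed.

Definition pd (y : nat) := pdiv y.
Definition ex (y : nat) := logn (pdiv y) y.
Definition rest (y : nat) := y %/ (pdiv y ^ logn (pdiv y) y).

Lemma Lpos n y : L n y -> 0 < y.
Proof. by case=> s [_ h ->]; apply: prod_primes_gt0. Qed.

Lemma Lrest n y : L n y -> 0 < n ->
  [/\ prime (pd y), 0 < ex y, ex y <= n, y = pd y ^ ex y * rest y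
      & L (n - ex y) (rest y) /\ ~~ (pd y %| rest y)].
Proof.
move=> [s [hsz hs hy]] n0.
have y1 : 1 < y.
  case: s hsz hs hy => [|q s] /=; first by move=> E; rewrite -E in n0.
  move=> _ /andP [pq hs] ->; rewrite big_cons.
  have := prod_primes_gt0 hs; have := prime_gt1 pq.
  by move=> h1 h2; apply: (leq_trans h1); rewrite leq_pmulr.
have pp : prime (pd y) by apply: pdiv_prime.
set p := pd y.
have ps : p \in s by apply: prime_dvd_prod => //; rewrite -hy; apply: pdiv_dvd.
set c := count (pred1 p) s.
set z := \prod_(q <- [seq t <- s | t != p]) q.
have hsf : all prime [seq t <- s | t != p].
  by apply/allP => t; rewrite mem_filter => /andP [_ ts]; apply: (allP hs).
have z0 : 0 < z by apply: prod_primes_gt0.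
have nd : ~~ (p %| z).
  apply/negP => /(prime_dvd_prod pp hsf); by rewrite mem_filter eqxx.
have yE : y = p ^ c * z by rewrite hy /z /c -prod_split.
have exE : ex y = c.
  rewrite /ex -/(pd y) -/p {1}yE.
  rewrite lognM; [|by rewrite expn_gt0 prime_gt0|done].
  by rewrite pfactorK // logn_coprime ?addn0 // prime_coprime.
have restE : rest y = z.
  by rewrite /rest -/(pd y) -/p -/(ex y) exE {1}yE mulKn // expn_gt0 prime_gt0.
rewrite exE restE; split => //.
- by rewrite /c -has_count has_pred1.
- by rewrite -hsz count_size.
split => //.
  exists [seq t <- s | t != p]; split => //.
  rewrite size_filter -hsz -(count_predC (pred1 p) s) addKn.
  by apply: eq_count => t.
Qed.

Lemma Fset_L m k nn A y : (forall i, i < m -> forall t, A i t -> prime t) ->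
  Fset m k nn A y -> L (sigma m k nn) y.
Proof.
move=> hA [a [ha _ ->]].
have -> : sigma m k nn = \sum_(i < m) \sum_(j < nn i) k i.
  by apply: eq_bigr => i _; rewrite sum_nat_const card_ord mulnC.
apply: (big_ind2 (fun a b => L a b)) => //; first exact: L0.
  by move=> ? ? ? ?; apply: L_mul.
move=> i _; apply: (big_ind2 (fun a b => L a b)) => //; first exact: L0.
  by move=> ? ? ? ?; apply: L_mul.
move=> j _; apply: L_pow; apply: (hA i (ltn_ord i)); exact: ha.
Qed.

Lemma entry_dvd m k nn (a : nat -> nat -> nat) i j : i < m -> j < nn i -> 0 < k i ->
  a i j %| \prod_(i < m) \prod_(j < nn i) a i j ^ k i.
Proof.
move=> hi hj hk.
rewrite (bigD1 (Ordinal hi)) //= (bigD1 (Ordinal hj)) //=.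
by apply: dvdn_mulr; apply: dvdn_mulr; apply: dvdn_exp.
Qed.

Lemma comb_inc m k nn A i0 q z : i0 < m -> (forall i, i < m -> 0 < k i) ->
  Fset m k nn A z -> A i0 q -> ~~ (q %| z) ->
  Fset m k (fun i => if i == i0 then (nn i).+1 else nn i) A (q ^ k i0 * z).
Proof.
move=> hi0 hk [a [ha hd ->]] hq nd.
exists (fun i j => if (i == i0) && (j == nn i0) then q else a i j); split.
- move=> i j hi; case: eqP => [-> | ni] /=.
    rewrite ltnS leq_eqVlt; case: eqP => [_ _ //|_ /= hj]; exact: ha.
  by move=> hj; apply: ha.
- have key : forall i j, i < m -> j < nn i -> q <> a i j.
    move=> i j hi hj E; apply: (negP nd); rewrite E; apply: entry_dvd => //; exact: hk.
  move=> i j i' j' hi hj hi' hj' ne.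
  have hj2 : forall i j, j < (if i == i0 then (nn i).+1 else nn i) ->
       ~~ ((i == i0) && (j == nn i0)) -> j < nn i.
    move=> i1 j1; case: eqP => [-> | _] //=; rewrite ltnS leq_eqVlt.
    by case/orP => [->|].
  case: andP => [[/eqP e1 /eqP e2]|n1]; case: andP => [[/eqP e3 /eqP e4]|n2].
  + by case: ne; rewrite e1 e2 e3 e4.
  + apply: key => //; apply: hj2 hj' _; apply/negP => /andP; exact: n2.
  + move=> E; apply: (key i j) => //; apply: hj2 hj _; apply/negP => /andP; exact: n1.
  + apply: hd => //; [apply: hj2 hj _|apply: hj2 hj' _]; apply/negP => /andP //.
- rewrite [RHS](bigD1 (Ordinal hi0)) //= eqxx big_ord_recr /= eqxx.
  rewrite [in LHS](bigD1 (Ordinal hi0)) //=.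
  rewrite [X in _ = _ * X](eq_bigr (fun i : 'I_m => \prod_(j < nn i) a i j ^ k i)); last first.
    move=> i ni; have F : (val i == i0) = false.
      apply/negP => /eqP E; apply: (negP ni); apply/eqP; apply: val_inj. exact E.
    by rewrite F; apply: eq_bigr.
  rewrite [X in _ = X * _ * _](eq_bigr (fun j : 'I_(nn i0) => a i0 j ^ k i0)); last first.
    by move=> j _; rewrite ltn_eqF.
  rewrite mulnCA !mulnA; reflexivity.
Qed.

Lemma lt_or_eq i m : i < m.+1 -> i < m \/ i = m.
Proof. rewrite ltnS leq_eqVlt => /orP [/eqP|]; auto. Qed.

Lemma comb_app m k nn A q z kq : (forall i, i < m -> 0 < k i) ->
  Fset m k nn A z -> A m q -> ~~ (q %| z) ->
  Fset m.+1 (fun i => if i == m then kq else k i) (fun i => if i == m then 1 else nn i)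
    A (q ^ kq * z).
Proof.
move=> hk [a [ha hd ->]] hq nd.
exists (fun i j => if i == m then q else a i j); split.
- move=> i j /lt_or_eq [hi|->]; last by rewrite eqxx.
  rewrite (ltn_eqF hi) => hj; exact: ha.
- have key : forall i j, i < m -> j < nn i -> q <> a i j.
    move=> i j hi hj E; apply: (negP nd); rewrite E; apply: entry_dvd => //; exact: hk.
  move=> i j i' j' /lt_or_eq [hi|ei] hj /lt_or_eq [hi'|ei'] hj' ne.
  + move: hj hj'; rewrite (ltn_eqF hi) (ltn_eqF hi') => hj hj'; exact: hd.
  + move: hj hj'; rewrite (ltn_eqF hi) ei' eqxx => hj _ E; exact: (key i j).
  + move: hj hj'; rewrite (ltn_eqF hi') ei eqxx => _ hj'; exact: key.
  + move: hj hj'; rewrite ei ei' eqxx !ltnS !leqn0 => /eqP e3 /eqP e4.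
    by case: ne; rewrite ei ei' e3 e4.
- rewrite [RHS]big_ord_recr /= eqxx big_ord_recr big_ord0 /= mul1n.
  rewrite [X in _ = X * _](eq_bigr (fun i : 'I_m => \prod_(j < nn i) a i j ^ k i)); last first.
    by move=> i _; rewrite (ltn_eqF (ltn_ord i)); apply: eq_bigr.
  rewrite mulnC; reflexivity.
Qed.

Lemma upow_sub u v k : is_ultrafilter u -> is_ultrafilter v -> 0 < k -> u Primes -> v Primes ->
  (forall C, upow u k C -> upow v k C) -> forall B, u B -> v B.
Proof.
move=> hu hv k0 uP vP H B uB; apply: NNPP => nvB.
have := H (fun c => exists b, B b /\ prime b /\ c = b ^ k).
case.
  exists (fun t => B t /\ Primes t); split; first exact: uf_and.
  by move=> a [Ba pa]; exists a.
move=> A' [vA' hA'].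
have [a [[Aa pa] nBa]] := uf_ne hv (uf_and hv (uf_and hv vA' vP) (uf_compl hv nvB)).
have [b [Bb [pb E]]] := hA' a Aa.
by apply: nBa; rewrite (expIn k0 E).
Qed.

Lemma upow_inj u v ku kv : is_ultrafilter u -> u Primes -> is_ultrafilter v -> v Primes ->
  0 < ku -> 0 < kv -> fam_eq (upow u ku) (upow v kv) -> fam_eq u v /\ ku = kv.
Proof.
move=> hu uP hv vP ku0 kv0 H.
have ek : ku = kv.
  have := (H (fun c => exists a, prime a /\ c = a ^ ku)).1.
  case. by exists Primes; split => // a pa; exists a.
  move=> A' [vA' hA'].
  have [a [Aa pa]] := uf_ne hv (uf_and hv vA' vP).
  have [b [pb E]] := hA' a Aa.
  have := congr1 (logn a) E; rewrite pfactorK // lognX logn_prime //.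
  case: eqP => [_|_]; first by rewrite muln1.
  by rewrite muln0 => E0; rewrite E0 in kv0.
subst kv; split => // B; split.
- apply: (upow_sub hu hv ku0 uP vP) => C; exact: (H C).1.
- apply: (upow_sub hv hu ku0 vP uP) => C; exact: (H C).2.
Qed.

Definition sep (u v : nset -> Prop) : nset :=
  epsilon (inhabits (fun _ => False)) (fun B => u B /\ v (fun t => ~ B t)).

Lemma sepP u v : is_ultrafilter u -> is_ultrafilter v -> ~ fam_eq u v ->
  u (sep u v) /\ v (fun t => ~ sep u v t).
Proof.
move=> hu hv ne; apply: (epsilon_spec (inhabits (fun _ => False))
   (fun B => u B /\ v (fun t => ~ B t))).
apply: NNPP => H; apply: ne => B; split => [uB|vB]; apply: NNPP => nB.
- apply: H; exists B; split => //; exact: uf_compl.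
- apply: H; exists (fun t => ~ B t); split; first exact: uf_compl.
  by apply: (uf_up hv vB) => t Bt; apply.
Qed.

Lemma adm_exists m p k nn : is_alpha m p k nn -> exists A, admissible m p A.
Proof.
case=> hp _ _ _.
pose Aof (u : nset -> Prop) : nset := fun t => prime t /\ forall l, l < m ->
   ~ fam_eq u (p l) -> sep u (p l) t /\ ~ sep (p l) u t.
exists (fun i => Aof (p i)); split.
- move=> i hi; have [hu uP] := hp i hi.
  apply: uf_and => //; apply: uf_fin => // l hl.
  have [hv vP] := hp l hl.
  case: (classic (fam_eq (p i) (p l))) => E.
    by apply: (uf_up hu (uf_T hu)).
  have [h1 _] := sepP hu hv E.
  have [_ h2] := sepP hv hu (fun E' => E (fam_eq_sym E')).
  by apply: (uf_up hu (uf_and hu h1 h2)) => t [? ?].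
- by move=> i hi t [].
- by move=> i j hi hj /fam_eq_eq ->.
- move=> i j hi hj ne t [[_ h1] [_ h2]].
  have [_ a1] := h1 j hj ne.
  have [a2 _] := h2 i hi (fun E' => ne (fam_eq_sym E')).
  exact: a1.
Qed.

Lemma main_rev n : forall x, is_ultrafilter x -> x (L n) ->
  exists (m : nat) (p : nat -> nset -> Prop) (k nn : nat -> nat),
      [/\ is_alpha m p k nn, sigma m k nn = n & F_sub m p k nn x].
Proof.
elim/ltn_ind: n => n IH x hx xL.
case: (posnP n) => [n0|n0].
  subst n; exists 0, (fun _ => x), (fun _ => 1), (fun _ => 1); split.
  - by split.
  - by rewrite /sigma big_ord0.
  - move=> A _; apply: (uf_up hx xL) => y [s [hs _ ->]].
    move/size0nil: hs => ->; exists (fun _ _ => 0); split => //.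
    by rewrite big_ord0 big_nil.
have [k0 hk0 xT] := uf_pick (f := ex) (N := n.+1) hx xL
  (fun y Ly => let: And5 _ _ h _ _ := Lrest Ly n0 in h).
have k0pos : 0 < k0.
  have [y [Ly <-]] := uf_ne hx xT; by case: (Lrest Ly n0).
have k0n : k0 <= n by [].
pose x' : nset -> Prop := fun B => x (fun y => B (rest y)).
have hx' : is_ultrafilter x'.
  case: (hx) => h1 h2 h3 h4 h5; split.
  - apply: (uf_up hx xL) => y Ly; case: (Lrest Ly n0) => _ _ _ _ [/Lpos] //.
  - exact: h2.
  - by move=> A B hA hAB; apply: (uf_up hx hA) => y; apply: hAB.
  - by move=> A B hA hB; apply: (uf_and hx hA hB).
  - by move=> A; apply: h5.
have x'L : x' (L (n - k0)).
  apply: (uf_up hx xT) => y [Ly ey]; case: (Lrest Ly n0) => _ _ _ _ [].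
  by rewrite ey.
have ltn0 : n - k0 < n by rewrite ltn_subrL k0pos n0.
have [m [p' [k' [nn' [ha hs hF]]]]] := IH (n - k0) ltn0 x' hx' x'L.
pose q0 : nset -> Prop := fun B => x (fun y => B (pd y)).
have hq0 : is_ultrafilter q0.
  case: (hx) => h1 h2 h3 h4 h5; split.
  - by apply: (uf_up hx (uf_T hx)) => y _; apply: pdiv_gt0.
  - exact: h2.
  - by move=> A B hA hAB; apply: (uf_up hx hA) => y; apply: hAB.
  - by move=> A B hA hB; apply: (uf_and hx hA hB).
  - by move=> A; apply: h5.
have q0P : q0 Primes.
  by apply: (uf_up hx xL) => y Ly; case: (Lrest Ly n0).
have hk : forall i, i < m -> 0 < k' i by case: ha.
case: (classic (exists i0, i0 < m /\ fam_eq (p' i0) q0 /\ k' i0 = k0)).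
  move=> [i0 [hi0 [E ek]]].
  exists m, p', k', (fun i => if i == i0 then (nn' i).+1 else nn' i); split.
  - case: ha => h1 h2 h3 h4; split => // i hi; case: eqP => _ //; exact: h3.
  - move: hs; rewrite /sigma (bigD1 (Ordinal hi0)) //= => hs'.
    rewrite (bigD1 (Ordinal hi0)) //= eqxx.
    rewrite (eq_bigr (fun i : 'I_m => k' i * nn' i)); last first.
      move=> i ni; have F : (val i == i0) = false.
        apply/negP => /eqP E'; apply: (negP ni); apply/eqP; apply: val_inj; exact E'.
      by rewrite F.
    by rewrite mulnS -addnA hs' ek subnKC.
  - move=> A adm; have h1 := hF A adm.
    have h2 : x (fun y => A i0 (pd y)).
      by case: adm => a1 _ _ _; apply/(E (A i0)); apply: a1.
    apply: (uf_up hx (uf_and hx (uf_and hx xT h1) h2)) => y [[[Ly ey] hFy] hAy].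
    case: (Lrest Ly n0) => pp ex0 exn yE [Lr nd].
    rewrite yE ey -ek; exact: comb_inc.
move=> Hn.
exists m.+1, (fun i => if i == m then q0 else p' i), (fun i => if i == m then k0 else k' i),
  (fun i => if i == m then 1 else nn' i); split.
- case: ha => h1 h2 h3 h4; split.
  + move=> i /lt_or_eq [hi|->]; last by rewrite eqxx.
    rewrite (ltn_eqF hi); exact: h1.
  + move=> i /lt_or_eq [hi|->]; last by rewrite eqxx.
    rewrite (ltn_eqF hi); exact: h2.
  + move=> i /lt_or_eq [hi|->]; last by rewrite eqxx.
    rewrite (ltn_eqF hi); exact: h3.
  + move=> i j /lt_or_eq [hi|->] /lt_or_eq [hj|->] ne.
    * rewrite (ltn_eqF hi) (ltn_eqF hj); exact: h4.
    * rewrite (ltn_eqF hi) eqxx => E.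
      have [hu uP] := h1 i hi.
      have [fe ke] := upow_inj hu uP hq0 q0P (h2 i hi) k0pos E.
      by apply: Hn; exists i.
    * rewrite (ltn_eqF hj) eqxx => E.
      have [hu uP] := h1 j hj.
      have [fe ke] := upow_inj hq0 q0P hu uP k0pos (h2 j hj) E.
      by apply: Hn; exists j; split => //; split; [apply: fam_eq_sym|].
    * by case: ne.
- rewrite /sigma big_ord_recr /= eqxx muln1.
  rewrite (eq_bigr (fun i : 'I_m => k' i * nn' i)); last first.
    by move=> i _ /=; rewrite (ltn_eqF (ltn_ord i)).
  by move: hs; rewrite /sigma => ->; rewrite subnK.
- move=> A [a1 a2 a3 a4].
  have adm' : admissible m p' A.
    split.
    + move=> i hi; have := a1 i (leqW hi); by rewrite (ltn_eqF hi).
    + move=> i hi; exact: a2 i (leqW hi).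
    + move=> i j hi hj; have := a3 i j (leqW hi) (leqW hj); by rewrite !ltn_eqF.
    + move=> i j hi hj; have := a4 i j (leqW hi) (leqW hj); by rewrite !ltn_eqF.
  have h1 := hF A adm'.
  have h2 : x (fun y => A m (pd y)).
    by have := a1 m (ltnSn m); rewrite eqxx.
  apply: (uf_up hx (uf_and hx (uf_and hx xT h1) h2)) => y [[[Ly ey] hFy] hAy].
  case: (Lrest Ly n0) => pp ex0 exn yE [Lr nd].
  rewrite yE ey; exact: comb_app.
Qed.

Theorem theorem2p7 (x : nset -> Prop) (n : nat) :
  is_ultrafilter x -> 0 < n ->
  ((exists (m : nat) (p : nat -> nset -> Prop) (k nn : nat -> nat),
      [/\ is_alpha m p k nn, sigma m k nn = n & F_sub m p k nn x])
   <-> in_closure (L n) x).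
Proof.
move=> hx n0; split.
- move=> [m [p [k [nn [ha hs hF]]]]].
  have [A adm] := adm_exists ha.
  have h := hF A adm; rewrite /in_closure -hs.
  apply: (uf_up hx h) => y; apply: Fset_L; by case: adm.
- move=> xL; exact: main_rev.
Qed.
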